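(* Let $q$ be a prime power and $n\ge 1$. Suppose $\frac{n(q-1)}{2}\le k\le n(q-1)$, $2k\equiv 0\pmod{q-1}$, and $k\not\equiv 0\pmod{q-1}$. Then $(C_{n,k}^q)^\perp$ is self-orthogonal. Equivalently, for every odd integer $r$ with $n\le r<2n$ (and $q$ odd), the code $(C_{n,r(q-1)/2}^q)^\perp$ is self-orthogonal.
   Context: For a prime power $q$ and integers $n\ge 1$, $k\ge 0$, the projective Reed-Muller code $C_{n,k}^q\subseteq \mathbb{F}_q^N$, $N=\frac{q^{n+1}-1}{q-1}$, is defined as follows. For each point of $\mathbb{P}^n(\mathbb{F}_q)$ choose the affine representative $(p_0,\dots,p_n)\in\mathbb{F}_q^{n+1}\setminus\{0\}$ whose left-most nonzero coordinate equals $1$, and fix an ordering $P_1',\dots,P_N'$ of these representatives. Then $C_{n,k}^q=\{(F(P_1'),\dots,F(P_N')) : F\in \mathbb{F}_q[x_0,\dots,x_n]_k\}$, where $\mathbb{F}_q[x_0,\dots,x_n]_k$ is the space of homogeneous polynomials of degree $k$ together with $0$. Duals are taken with respect to the standard dot product; a code $C$ is self-orthogonal if $C\subseteq C^\perp$. *)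

(* Defs.v *)
From HB Require Import structures.
From mathcomp Require Import all_boot all_order all_algebra all_field.
From mathcomp Require Import mpoly.
Set Implicit Arguments. Unset Strict Implicit. Unset Printing Implicit Defensive.
Import GRing.Theory.
Local Open Scope ring_scope.

(* Affine representatives of points of P^n(F_q): nonzero vectors in         *)
(* F^{n+1} whose left-most nonzero coordinate equals 1.                      *)
Definition normalized (F : finFieldType) (n : nat) (v : {ffun 'I_n.+1 -> F}) : bool :=
  [exists i : 'I_n.+1, (v i == 1) && [forall j : 'I_n.+1, (j < i)%N ==> (v j == 0)]].

Definition ppoint (F : finFieldType) (n : nat) : finType :=
  {v : {ffun 'I_n.+1 -> F} | normalized v}.

Definition word (F : finFieldType) (n : nat) := {ffun ppoint F n -> F}.

Definition dotw (F : finFieldType) (n : nat) (u v : word F n) : F :=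
  \sum_(P : ppoint F n) u P * v P.

Definition code (F : finFieldType) (n : nat) := word F n -> Prop.

Definition projRM (F : finFieldType) (n k : nat) : code F n :=
  fun c => exists p : {mpoly F[n.+1]},
    p \is k.-homog /\ forall P : ppoint F n, c P = p.@[fun i => (val P) i].

Definition dual_code (F : finFieldType) (n : nat) (C : code F n) : code F n :=
  fun u => forall c, C c -> dotw u c = 0.

Definition self_orthogonal (F : finFieldType) (n : nat) (C : code F n) : Prop :=
  forall u v, C u -> C v -> dotw u v = 0.

(* Main.v *)
Require Import Defs.
From HB Require Import structures.
From mathcomp Require Import all_boot all_order all_algebra all_field.
From mathcomp Require Import mpoly.
From mathcomp Require Import fingroup cyclic.
From mathcomp Require Import zify ring lra.
Set Implicit Arguments. Unset Strict Implicit. Unset Printing Implicit Defensive.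
Import GRing.Theory.
Local Open Scope ring_scope.

Section FF.
Variable F : finFieldType.
Local Notation q := #|F|.
Local Notation q1 := (#|F|.-1).

Lemma cardF_gt1 : (1 < q)%N.
Proof. exact: finNzRing_gt1. Qed.

Lemma q1_gt0 : (0 < q1)%N.
Proof. have := cardF_gt1; lia. Qed.

Lemma natr_card : (q%:R : F) = 0.
Proof.
have := @expg_cardG F [set: F] (1%R : F) (in_setT _); rewrite cardsT FinRing.zmodXgE; done.
Qed.

Lemma natr_q1 : (q1%:R : F) = -1.
Proof.
have h := cardF_gt1.
apply: (addIr 1); rewrite addNr -mulrSr prednK ?natr_card //; exact: ltnW.
Qed.

Lemma expf_q1 (t : F) : t != 0 -> t ^+ q1 = 1.
Proof.
move=> nz; apply: (mulIf nz); rewrite mul1r -exprSr prednK ?expf_card //.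
exact: ltnW cardF_gt1.
Qed.

Lemma expf_q1E (t : F) : t ^+ q1 = if t == 0 then 0 else 1.
Proof.
case: eqP => [->|/eqP nz]; last exact: expf_q1.
by rewrite expr0n; case: q1 q1_gt0.
Qed.

Lemma expf_modq1 (t : F) (e : nat) : t != 0 -> t ^+ e = t ^+ (e %% q1).
Proof.
move=> nz; by rewrite {1}(divn_eq e q1) exprD mulnC exprM expf_q1 // expr1n mul1r.
Qed.


Lemma exists_nonroot (e : nat) : ~~ (q1 %| e)%N -> exists2 t : F, t != 0 & t ^+ e != 1.
Proof.
move=> nd; set r := (e %% q1)%N.
have r_gt0 : (0 < r)%N by rewrite lt0n -/(dvdn q1 e).
have r_lt : (r < q1)%N by rewrite ltn_mod q1_gt0.
case: (boolP [exists t : F, (t != 0) && (t ^+ e != 1)]) => [/existsP[t /andP[]]|]; first by exists t.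
rewrite negb_exists => /forallP H; exfalso.
have Hr : all (root ('X^r - 1)) (enum (predC1 (0 : F))).
  apply/allP => t; rewrite mem_enum => nz'; have nz : t != 0 := nz'.
  have := H t; rewrite nz /= negbK => /eqP He.
  by rewrite rootE !hornerE -expf_modq1 // He subrr.
have hs : size ('X^r - 1 : {poly F}) = r.+1 by rewrite -polyC1 size_XnsubC.
have := max_poly_roots _ Hr (enum_uniq _).
rewrite hs -cardE cardC1 -size_poly_eq0 hs => /(_ isT).
by rewrite ltnS leqNgt r_lt.
Qed.

Lemma sumpow (e : nat) :
  \sum_(t : F) t ^+ e = if ((0 < e)%N && (q1 %| e)%N) then -1 else 0.
Proof.
case: e => [|e] /=.
  rewrite (eq_bigr (fun _ => 1)) ?sumr_const; first exact: natr_card.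
  by move=> t _; rewrite expr0.
case: (boolP (q1 %| e.+1)%N) => [dv|nd].
  rewrite (bigD1 0) //= expr0n /= add0r.
  rewrite (eq_bigr (fun _ => 1)) ?sumr_const ?cardC1 ?natr_q1 //.
  by move=> t nz; rewrite expf_modq1 // (eqP dv) expr0.
have [t0 nz0 ne1] := exists_nonroot nd.
set S := \sum_(t : F) _.
have : S = t0 ^+ e.+1 * S.
  rewrite {1}/S (reindex_inj (mulfI nz0)) /S mulr_sumr.
  by apply: eq_bigr => t _; rewrite exprMn.
move/eqP; rewrite -subr_eq0 -{1}[S]mul1r -mulrBl mulf_eq0 subr_eq0 eq_sym (negbTE ne1) /=.
by move/eqP.
Qed.

End FF.

Section Proj.
Variable F : finFieldType.
Variable n : nat.
Local Notation q := #|F|.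
Local Notation q1 := (#|F|.-1).
Local Notation I := 'I_n.+1.
Local Notation V := {ffun I -> F}.
Local Notation PP := (ppoint F n).

Lemma lead_exists (x : V) : (exists i, x i != 0) ->
  exists i, (x i != 0) && [forall j : I, (j < i)%N ==> (x j == 0)].
Proof.
move=> [i0 Hi0].
have ex : exists m, [exists i : I, (val i == m) && (x i != 0)].
  by exists (val i0); apply/existsP; exists i0; rewrite eqxx.
case: (ex_minnP ex) => m /existsP [i /andP [/eqP im xi]] minm.
exists i; rewrite xi /=; apply/forallP => j; apply/implyP => ji.
apply/negPn/negP => xj.
have Hj : [exists i0 : I, (val i0 == val j) && (x i0 != 0)].
  by apply/existsP; exists j; rewrite eqxx xj.
by have := minm _ Hj; rewrite -im leqNgt ji.
Qed.

Lemma normP (P : PP) : exists i, (val P i == 1) && [forall j : I, (j < i)%N ==> (val P j == 0)].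
Proof. by have := valP P; rewrite /normalized => /existsP. Qed.

Lemma norm_unique (P Q : PP) (l : F) : (forall j, val Q j = l * val P j) -> Q = P.
Proof.
move=> H.
have [i /andP [/eqP Pi /forallP Pj]] := normP P.
have [i' /andP [/eqP Qi /forallP Qj]] := normP Q.
have [lt|lt|eq] := ltngtP i i'.
- have := Qj i; rewrite lt /= H Pi mulr1 => /eqP l0.
  by move: Qi; rewrite H l0 mul0r => /eqP; rewrite eq_sym oner_eq0.
- have := Pj i'; rewrite lt /= => /eqP P0.
  by move: Qi; rewrite H P0 mulr0 => /eqP; rewrite eq_sym oner_eq0.
- have ii : i = i' by apply: val_inj.
  move: Qi; rewrite -ii H Pi mulr1 => l1.
  by apply: val_inj; apply/ffunP => j; rewrite H l1 mul1r.
Qed.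

Definition scl (l : F) (x : V) : V := [ffun j => l * x j].

Lemma proj_surj (x : V) : x != 0 -> exists l, exists P : PP, l != 0 /\ x = scl l (val P).
Proof.
move=> nz.
have ex : exists i, x i != 0.
  case: (boolP [exists i, x i != 0]) => [/existsP //|].
  rewrite negb_exists => /forallP H.
  exfalso; move/eqP: nz; apply; apply/ffunP => j; rewrite ffunE.
  by apply/eqP; have := H j; rewrite negbK.
have [i /andP [xi /forallP xj]] := lead_exists ex.
pose v : V := [ffun j => (x i)^-1 * x j].
have nv : normalized v.
  apply/existsP; exists i; rewrite ffunE mulVf // eqxx /=.
  apply/forallP => j; apply/implyP => ji; rewrite ffunE.
  by have := xj j; rewrite ji /= => /eqP ->; rewrite mulr0.
exists (x i), (exist _ v nv); split => //.
by apply/ffunP => j; rewrite !ffunE /= mulrA mulfV // mul1r.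
Qed.

Lemma sum_proj (G : V -> F) : (forall l x, l != 0 -> G (scl l x) = G x) ->
  \sum_(x : V) G x = G 0 - \sum_(P : PP) G (val P).
Proof.
move=> HG.
rewrite (bigD1 (0 : V)) //=; congr (_ + _).
pose A := [set p : F * PP | p.1 != 0].
pose f := fun p : F * PP => scl p.1 (val p.2).
have finj : {in A &, injective f}.
  move=> [l P] [m Q]; rewrite !inE /= => l0 m0 /ffunP E.
  have EQ : Q = P.
    apply: (@norm_unique P Q (l / m)) => j.
    have := E j; rewrite /f /scl !ffunE /= => Ej.
    by apply: (mulfI m0); rewrite -Ej mulrA [m * _]mulrCA mulfV // mulr1.
  subst Q; have [i /andP [/eqP Pi _]] := normP P.
  by have := E i; rewrite /f /scl !ffunE /= Pi !mulr1 => ->.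
have im : [set f p | p in A] = [set x : V | x != 0].
  apply/setP => x; rewrite inE; apply/imsetP/idP.
  - move=> [[l P]]; rewrite inE /= => l0 ->.
    apply/negP => /eqP/ffunP E.
    have [i /andP [/eqP Pi _]] := normP P.
    by have := E i; rewrite /f /scl !ffunE /= Pi mulr1 => /eqP; rewrite (negbTE l0).
  - move=> /proj_surj [l [P [l0 ->]]]; by exists (l, P); rewrite ?inE.
rewrite (eq_bigl (fun x => x \in [set f p | p in A])); last by move=> x; rewrite im inE.
rewrite big_imset //=.
rewrite (eq_bigr (fun p => G (val p.2))); last by move=> [l P]; rewrite inE /= => l0; rewrite /f HG.
rewrite (eq_bigl (fun p : F * PP => (p.1 != 0) && true)); last by move=> p; rewrite inE andbT.
rewrite -(pair_big_dep (fun l : F => l != 0) (fun _ _ => true) (fun _ P => G (val P))) /=.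
rewrite sumr_const cardC1 -mulr_natr natr_q1 mulrN1.
done.
Qed.

Definition mon (e : I -> nat) (x : V) : F := \prod_i x i ^+ e i.

Lemma mon_scl e l x : mon e (scl l x) = l ^+ (\sum_i e i) * mon e x.
Proof.
rewrite /mon -prodrXr -big_split; apply: eq_bigr => i _; by rewrite ffunE exprMn.
Qed.

Lemma proj_mon e : (0 < \sum_i e i)%N -> (q1 %| \sum_i e i)%N ->
  \sum_(P : PP) mon e (val P) = - \prod_i \sum_(t : F) t ^+ e i.
Proof.
move=> pos dv.
rewrite bigA_distr_bigA /= -/(mon e _).
have -> : \sum_(f : {ffun I -> F}) \prod_i f i ^+ e i = \sum_(x : V) mon e x by [].
rewrite sum_proj.
- have -> : mon e 0 = 0.
    have : (0 < \sum_i e i)%N := pos.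
    rewrite lt0n sum_nat_eq0 negb_forall => /existsP [i]; rewrite implyTb => ei.
    rewrite /mon (bigD1 i) //= ffunE expr0n (negbTE ei) mul0r //.
  by rewrite sub0r opprK.
- move=> l x l0; rewrite mon_scl expf_modq1 // (eqP dv) expr0 mul1r //.
Qed.

Local Notation R := {ffun I -> 'I_q1.+1}.

Definition sdeg (a : R) : nat := (\sum_i (a i : nat))%N.
Definition mw (a : R) : word F n := [ffun P : PP => mon (fun i => a i) (val P)].
Definition comp (b : R) : R := [ffun i => rev_ord (b i)].

Lemma mon_mul e e' x : mon e x * mon e' x = mon (fun i => e i + e' i)%N x.
Proof. by rewrite /mon -big_split; apply: eq_bigr => i _; rewrite exprD. Qed.

Lemma pair_mw (a b : R) : (sdeg a %% q1 = sdeg b %% q1)%N -> (0 < sdeg a)%N ->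
  dotw (mw a) (mw (comp b)) =
  - \prod_i (if ((0 < a i + (q1 - b i))%N && (q1 %| a i + (q1 - b i))%N) then -1 else 0).
Proof.
move=> cong pos.
rewrite /dotw (eq_bigr (fun P : PP => mon (fun i => (a i + (q1 - b i))%N) (val P))); last first.
  by move=> P _; rewrite !ffunE mon_mul /mon; apply: eq_bigr => i _; rewrite ffunE /= subSS.
have HX : ((\sum_i (a i + (q1 - b i))) + sdeg b = sdeg a + n.+1 * q1)%N.
  rewrite /sdeg -!big_split /=.
  have hc : (\sum_(i : I) q1 = n.+1 * q1)%N by rewrite sum_nat_const card_ord.
  rewrite -hc -big_split /=.
  apply: eq_bigr => i _; have := ltn_ord (b i); rewrite ltnS => hb; by rewrite -addnA subnK.
rewrite proj_mon.
- by congr (- _); apply: eq_bigr => i _; rewrite sumpow.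
- by apply: (leq_trans pos); rewrite /sdeg; apply: leq_sum => i _; apply: leq_addr.
- have E : ((\sum_i (a i + (q1 - b i))) + sdeg b == 0 + sdeg b %[mod q1])%N.
    by rewrite add0n HX addnC modnMDl cong.
  by move: E; rewrite eqn_modDr mod0n.
Qed.

Lemma sdeg_comp (b : R) : (sdeg (comp b) + sdeg b = n.+1 * q1)%N.
Proof.
have hc : (\sum_(i : I) q1 = n.+1 * q1)%N by rewrite sum_nat_const card_ord.
rewrite /sdeg -big_split -hc; apply: eq_bigr => i _ /=.
rewrite ffunE /= subSS subnK //; have := ltn_ord (b i); by rewrite ltnS.
Qed.

Lemma triang (k : nat) (d : R -> F) :
  (k %% q1 != 0)%N ->
  (forall a, d a != 0 -> (sdeg a %% q1 = k %% q1)%N) ->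
  (forall b, d b != 0 -> (k < sdeg b)%N ->
     dotw [ffun P => \sum_a d a * mw a P] (mw (comp b)) = 0) ->
  forall a, (k < sdeg a)%N -> d a = 0.
Proof.
move=> kq cl orth a0 ka0; apply/eqP; apply: contraT => da0.
pose S := [pred a | (k < sdeg a)%N && (d a != 0)].
have Sa0 : S a0 by rewrite /S /= ka0 da0.
case: (arg_maxnP (fun a => sdeg a) Sa0) => b /andP [kb db] maxb.
have pos : forall a, d a != 0 -> (0 < sdeg a)%N.
  move=> a da; rewrite lt0n; apply/negP => /eqP s0.
  by have := cl a da; rewrite s0 mod0n => /esym/eqP; rewrite (negbTE kq).
have H := orth b db kb.
move: H; rewrite /dotw.
rewrite (eq_bigr (fun P => \sum_a d a * (mw a P * mw (comp b) P))); last first.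
  by move=> P _; rewrite ffunE mulr_suml; apply: eq_bigr => a _; rewrite mulrA.
rewrite exchange_big /=.
rewrite (eq_bigr (fun a => d a * dotw (mw a) (mw (comp b)))); last first.
  by move=> a _; rewrite /dotw mulr_sumr.
rewrite (bigD1 b) //= big1 ?addr0; last first.
  move=> a ab; case: (eqVneq (d a) 0) => [->|da]; first by rewrite mul0r.
  rewrite pair_mw ?pos //; last by rewrite (cl a da) (cl b db).
  suff [i Hi] : exists i, ~~ ((0 < a i + (q1 - b i))%N && (q1 %| a i + (q1 - b i))%N).
    by rewrite (bigD1 i) //= (negbTE Hi) mul0r oppr0 mulr0.
  apply/existsP; apply: contraT; rewrite negb_exists => /forallP Hall.
  have ge : forall i, (b i <= a i)%N.
    move=> i; have := Hall i; rewrite negbK => /andP [p dv].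
    have := dvdn_leq p dv; have := ltn_ord (b i); rewrite ltnS => hb.
    move=> h; rewrite -(leq_add2r (q1 - b i)) subnKC //.
  have [i ne] : exists i, a i != b i.
    apply/existsP; apply: contraT; rewrite negb_exists => /forallP Hne.
    move: ab; rewrite (_ : a = b) ?eqxx //.
    by apply/ffunP => j; apply/eqP; have := Hne j; rewrite negbK.
  have lt : (sdeg b < sdeg a)%N.
    rewrite /sdeg (bigD1 i) //= [X in (_ < X)%N](bigD1 i) //=.
    rewrite -addSn leq_add //; first by rewrite ltn_neqAle ge eq_sym ne.
    by apply: leq_sum => j _; apply: ge.
  have Sa : S a by rewrite /S /= da (ltn_trans kb lt).
  have h : (sdeg a <= sdeg b)%N := maxb a Sa.
  by move: lt; rewrite ltnNge h.
rewrite pair_mw ?pos //.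
rewrite (eq_bigr (fun _ => -1)); last first.
  move=> i _; have := ltn_ord (b i); rewrite ltnS => hb.
  by rewrite subnKC // q1_gt0 dvdnn.
rewrite prodr_const card_ord => /eqP; rewrite mulf_eq0 (negbTE db) /= oppr_eq0.
by rewrite expf_eq0 oppr_eq0 oner_eq0 andbF.
Qed.

End Proj.

Section Poly.
Variable F : finFieldType.
Variable n : nat.
Local Notation q := #|F|.
Local Notation q1 := (#|F|.-1).
Local Notation I := 'I_n.+1.
Local Notation V := {ffun I -> F}.
Local Notation PP := (ppoint F n).
Local Notation R := {ffun I -> 'I_q1.+1}.

Definition red (e : nat) : 'I_q1.+1 := inord (if e is 0 then 0 else (e.-1 %% q1).+1)%N.

Lemma red_val e : (red e : nat) = (if e is 0 then 0 else (e.-1 %% q1).+1)%N.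
Proof.
rewrite /red inordK //; case: e => [|e] //=.
by rewrite ltnS ltn_mod q1_gt0.
Qed.

Lemma red_pow (t : F) e : t ^+ e = t ^+ red e.
Proof.
rewrite red_val; case: e => [|e] //=.
case: (eqVneq t 0) => [->|nz]; first by rewrite !expr0n.
by rewrite !exprS (expf_modq1 e nz).
Qed.

Lemma red_mod e : (red e %% q1 = e %% q1)%N.
Proof.
rewrite red_val; case: e => [|e] //=.
by rewrite -addn1 modnDml addn1.
Qed.

Definition tau (m : 'X_{1..n.+1}) : R := [ffun i => red (m i)].

Lemma tau_sdeg m : (sdeg (tau m) %% q1 = mdeg m %% q1)%N.
Proof.
rewrite /sdeg mdegE -modn_summ -[RHS]modn_summ; congr (_ %% _)%N.
by apply: eq_bigr => i _; rewrite ffunE red_mod.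
Qed.

Lemma decomp (K : nat) (p : {mpoly F[n.+1]}) : p \is K.-homog ->
  exists d : R -> F, (forall a, d a != 0 -> (sdeg a %% q1 = K %% q1)%N) /\
    forall P : PP, p.@[fun i => (val P) i] = \sum_a d a * mw a P.
Proof.
move=> hp.
exists (fun a => \sum_(m <- msupp p | tau m == a) p@_m); split.
- move=> a; case: (boolP (has (fun m => tau m == a) (msupp p))) => [/hasP [m mm /eqP <-] _|nh].
    by rewrite tau_sdeg (dhomogP _ _ _ hp m mm).
  rewrite big_seq_cond big1 ?eqxx // => m /andP [mm ta].
  by move/hasPn: nh => /(_ m mm); rewrite ta.
- move=> P; rewrite mevalE.
  rewrite (eq_bigr (fun m => \sum_(a | tau m == a) p@_m * mw a P)); last first.
    move=> m _; rewrite (big_pred1 (tau m)); last by move=> a; rewrite /= eq_sym.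
    rewrite ffunE /mon; congr (_ * _); apply: eq_bigr => i _; by rewrite ffunE -red_pow.
  rewrite (exchange_big_dep xpredT) //=.
  by apply: eq_bigr => a _; rewrite mulr_suml.
Qed.

Lemma projRM_lin (k : nat) (J : finType) (c : J -> F) (w : J -> word F n) :
  (forall j, c j != 0 -> projRM k (w j)) -> projRM k [ffun P => \sum_j c j * w j P].
Proof.
move=> H.
have H' : forall j, exists p : {mpoly F[n.+1]}, p \is k.-homog /\
    (c j != 0 -> forall P : PP, w j P = p.@[fun i => (val P) i]).
  move=> j; case: (eqVneq (c j) 0) => [cj|cj].
    exists 0; split; first exact: rpred0.
    by [].
  by have [p [hp ep]] := H j cj; exists p; split.
have [pp Hpp] := fin_all_exists H'.
exists (\sum_j c j *: pp j); split.
  by apply: rpred_sum => j _; apply: rpredZ; case: (Hpp j).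
move=> P; rewrite ffunE raddf_sum /=; apply: eq_bigr => j _.
rewrite mevalZ; case: (eqVneq (c j) 0) => [->|cj]; first by rewrite !mul0r.
by case: (Hpp j) => _ /(_ cj P) ->.
Qed.

Lemma mw_in (k : nat) (a : R) : (sdeg a <= k)%N -> (sdeg a %% q1 = k %% q1)%N ->
  (0 < sdeg a)%N -> projRM k (mw a).
Proof.
move=> ak cong pos.
have [i0 ai0] : exists i0, (0 < a i0)%N.
  move: pos; rewrite /sdeg lt0n sum_nat_eq0 negb_forall => /existsP [i]; rewrite implyTb => ei.
  by exists i; rewrite lt0n.
pose c := (k - sdeg a)%N.
have cdv : (c %% q1 = 0)%N.
  have := eqn_mod_dvd q1 ak; rewrite eq_sym -/c cong eqxx => /esym/dvdnP [x ->].
  by rewrite modnMl.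
pose m := [multinom (a j + (if j == i0 then c else 0))%N | j < n.+1].
exists 'X_[m]; split.
  rewrite dhomogX; apply/eqP; change (mdeg m = k); rewrite mdegE.
  rewrite (eq_bigr (fun j => a j + (if j == i0 then c else 0))%N); last by move=> j _; rewrite mnmE.
  rewrite big_split /= -big_mkcond /= big_pred1_eq /c subnKC //.
move=> P; rewrite mevalX ffunE /mon; apply: eq_bigr => j _; rewrite mnmE.
case: (eqVneq j i0) => [->|_]; last by rewrite addn0.
case: (eqVneq (val P i0) 0) => [->|nz].
  by rewrite !expr0n addn_eq0 !eqn0Ngt ai0.
by rewrite exprD (expf_modq1 c nz) cdv expr0 mulr1.
Qed.

Lemma dhomog_prod_ord (d m : nat) (g : 'I_m -> {mpoly F[n.+1]}) :
  (forall j, g j \is d.-homog) -> \prod_(j < m) g j \is (m * d).-homog.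
Proof.
elim: m g => [|m IH] g H; first by rewrite big_ord0 mul0n dhomog1.
by rewrite big_ord_recr /= mulSnr; apply: dhomogM; [apply: IH | apply: H].
Qed.

Lemma dhomogXi (i : I) : ('X_i : {mpoly F[n.+1]}) \is 1.-homog.
Proof. by rewrite dhomogX; apply/eqP; change (mdeg U_(i) = 1)%N; rewrite mdeg1. Qed.

Lemma dhomogX1 (p : {mpoly F[n.+1]}) e : p \is 1.-homog -> p ^+ e \is e.-homog.
Proof. by move=> h; rewrite -{2}[e]mul1n; apply: dhomogMn. Qed.

Lemma dhomogXik (i : I) e : ('X_i ^+ e : {mpoly F[n.+1]}) \is e.-homog.
Proof. exact: dhomogX1 (dhomogXi i). Qed.

Lemma indicator_in (k : nat) (P : PP) : (0 < k)%N ->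
  projRM (k + n.+1 * q1) [ffun Q : PP => ((Q == P)%:R : F)].
Proof.
move=> k0.
have [i /andP [/eqP Pi _]] := normP P.
exists ('X_i ^+ k * \prod_(j < n.+1) ('X_i ^+ q1 - ('X_j - (val P j) *: 'X_i) ^+ q1)); split.
  apply: dhomogM; first exact: dhomogXik.
  apply: dhomog_prod_ord => j.
  have h1 : ('X_i ^+ q1 : {mpoly F[n.+1]}) \is q1.-homog.
    exact: dhomogXik.
  apply: rpredB => //.
  apply: dhomogX1; apply: rpredB; first exact: dhomogXi.
  by apply: rpredZ; apply: dhomogXi.
move=> Q; rewrite ffunE rmorphM rmorphXn rmorph_prod /= mevalXU.
under eq_bigr => j _ do rewrite rmorphB rmorphXn rmorphXn rmorphB /= mevalZ !mevalXU.
case: (eqVneq (val Q i) 0) => [Qi0|Qi].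
  rewrite Qi0 expr0n (negbTE (lt0n_neq0 k0)) mul0r.
  case: eqP => // QP; move: Qi0; rewrite QP Pi => /eqP; by rewrite oner_eq0.
rewrite expf_q1 //.
case: (boolP [forall j, val Q j == val P j * val Q i]) => [/forallP all|].
  have QP : Q = P.
    by apply: (@norm_unique _ _ P Q (val Q i)) => j; rewrite (eqP (all j)) mulrC.
  rewrite QP eqxx big1 ?mulr1; last by move=> j _; rewrite Pi mulr1 subrr expr0n eqn0Ngt q1_gt0 subr0.
  by move: Qi; rewrite QP Pi expr1n.
rewrite negb_forall => /existsP [j nj].
have QP : (Q == P) = false.
  apply/negP => /eqP QP; move: nj; rewrite QP Pi mulr1 eqxx //.
rewrite QP (bigD1 j) //= expf_q1 ?subrr ?mul0r ?mulr0 //.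
by rewrite subr_eq0.
Qed.

Lemma all_words (k : nat) (u : word F n) : (0 < k)%N -> projRM (k + n.+1 * q1) u.
Proof.
move=> k0.
have := @projRM_lin (k + n.+1 * q1) PP (fun P => u P)
  (fun P => [ffun Q : PP => ((Q == P)%:R : F)]) (fun P _ => indicator_in P k0).
suff -> : [ffun P0 => \sum_j u j * [ffun Q => ((Q == j)%:R : F)] P0] = u by [].
apply/ffunP => Q; rewrite ffunE (bigD1 Q) //= ffunE eqxx mulr1 big1 ?addr0 //.
by move=> P nP; rewrite ffunE eq_sym (negbTE nP) mulr0.
Qed.

End Poly.

Local Close Scope ring_scope.

Lemma arith (Q n k sc sb : nat) : 0 < Q -> n * Q <= 2 * k -> (2 * k) %% Q = 0 ->
  k %% Q != 0 -> sb %% Q = k %% Q -> k < sb -> sc + sb = n.+1 * Q ->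
  [/\ sc <= k, sc %% Q = k %% Q & 0 < sc].
Proof.
move=> Q0 h2 h4 h5 hb kb hs.
set r := k %% Q.
have Hk : k = k %/ Q * Q + r by rewrite /r -divn_eq.
have Hb : sb = sb %/ Q * Q + r by rewrite {1}(divn_eq sb Q) hb.
have r0 : 0 < r by rewrite lt0n.
have rQ : r < Q by rewrite ltn_mod.
have r2 : 2 * r = Q.
  have : Q %| 2 * r.
    have : Q %| 2 * k by apply/dvdnP; exists (2 * k %/ Q); rewrite {1}(divn_eq (2 * k) Q) h4 addn0.
    by rewrite {1}Hk mulnDr mulnA dvdn_addr // dvdn_mull.
  case/dvdnP => t; case: t => [|[|t]] ht; nia.
have lt : k %/ Q < sb %/ Q.
  rewrite -(ltn_pmul2r Q0) -(ltn_add2r r) -Hk -Hb //.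
have ge : k + Q <= sb.
  have h : (k %/ Q).+1 * Q <= sb %/ Q * Q by rewrite leq_mul2r lt orbT.
  rewrite mulSn in h; lia.
have M : sc %% Q = r.
  have E : sc + sb == r + sb %[mod Q].
    rewrite hs [in r + sb]Hb.
    have -> : r + (sb %/ Q * Q + r) = (sb %/ Q).+1 * Q by rewrite mulSnr; lia.
    by rewrite !modnMl.
  by move: E; rewrite eqn_modDr => /eqP ->; rewrite /r modn_mod.
split => //.
- rewrite mulSn in hs; lia.
- rewrite lt0n; apply/negP => /eqP s0; move: M; rewrite s0 mod0n => rr.
  by move: r0; rewrite -rr.
Qed.


Theorem mainTheorem6 (F : finFieldType) (n k : nat) :
  (1 <= n)%N ->
  (n * (#|F| - 1) <= 2 * k)%N ->
  (k <= n * (#|F| - 1))%N ->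
  ((2 * k) %% (#|F| - 1) = 0)%N ->
  (k %% (#|F| - 1) != 0)%N ->
  self_orthogonal (dual_code (@projRM F n k)).
Proof.
move=> h1 h2 h3 h4 h5.
rewrite subn1 in h2 h3 h4 h5.
have k0 : (0 < k)%N by rewrite lt0n; apply: contraNneq h5 => ->; rewrite mod0n.
suff dual_sub : forall w : word F n, dual_code (projRM k) w -> projRM k w.
  by move=> u v hu hv; exact: (hu v (dual_sub v hv)).
move=> w hw.
have [p [hp ep]] := all_words w k0.
have [d [dcl dE]] := decomp hp.
have dcl' : forall a, (d a != 0)%R -> (sdeg a %% #|F|.-1 = k %% #|F|.-1)%N.
  by move=> a /dcl; rewrite addnC modnMDl.
have wE : w = [ffun P => (\sum_a d a * mw a P)%R] by apply/ffunP => P; rewrite ffunE ep dE.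
have tri := triang h5 dcl'.
have orth : forall b, (d b != 0)%R -> (k < sdeg b)%N ->
    dotw [ffun P => (\sum_a d a * mw a P)%R] (mw (comp b)) = 0%R.
  move=> b db kb; rewrite -wE; apply: hw.
  have [c1 c2 c3] := arith (q1_gt0 F) h2 h4 h5 (dcl' b db) kb (sdeg_comp b).
  exact: mw_in.
rewrite wE; apply: projRM_lin => a da.
case: (leqP (sdeg a) k) => [ak|ka].
  apply: mw_in => //; first exact: dcl'.
  rewrite lt0n; apply/negP => /eqP s0; move: (dcl' a da); rewrite s0 mod0n => /esym/eqP.
  by rewrite (negbTE h5).
by move: da; rewrite (tri orth a ka) eqxx.
Qed.
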